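(* Let $\mathcal H$ be a family of graphs. The following are equivalent: (i) there is a constant $c=c(\mathcal H)$ such that every (not necessarily connected) $\mathcal H$-free graph $G$ has fewer than $c$ vertices of degree at least $2$; (ii) there is a positive integer $n$ such that $\mathcal H\le \{K_n,\ nP_3,\ nK_3,\ K_{1,n}^*,\ K_{2,n},\ K_2+nK_1,\ K_1+nK_2\}$.
   Context: All graphs are finite, simple, undirected. For graphs $H_1,H_2$, write $H_1\prec H_2$ if $H_2$ contains an induced subgraph isomorphic to $H_1$. A graph $G$ is $\mathcal H$-free if no $H\in\mathcal H$ satisfies $H\prec G$. For families $\mathcal H_1,\mathcal H_2$, write $\mathcal H_1\le\mathcal H_2$ if for every $H_2\in\mathcal H_2$ there is $H_1\in\mathcal H_1$ with $H_1\prec H_2$. $K_n$, $P_n$ are the complete graph and path on $n$ vertices; $K_{s,t}$ is the complete bipartite graph; $nG$ is the disjoint union of $n$ copies of $G$; $G_1+G_2$ is the join (disjoint union plus all edges between $V(G_1)$ and $V(G_2)$). $K_{1,n}^*$ is obtained from the star $K_{1,n}$ by attaching a new pendant vertex to each leaf. *)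

(* Defs.v *)
From mathcomp Require Import all_boot.
Set Implicit Arguments. Unset Strict Implicit. Unset Printing Implicit Defensive.

(* A finite simple graph, with vertex set 'I_n (every finite graph is
   isomorphic to one of these). *)
Record graph := Graph {
  gn : nat;
  gadj : rel 'I_gn;
  gsym : symmetric gadj;
  girr : irreflexive gadj }.
Arguments gadj : clear implicits.

Definition mkadj (n : nat) (r : nat -> nat -> bool) : rel 'I_n :=
  fun x y => (x != y) && (r x y || r y x).

Lemma mkadj_sym n r : symmetric (@mkadj n r).
Proof. by move=> x y; rewrite /mkadj eq_sym orbC. Qed.

Lemma mkadj_irr n r : irreflexive (@mkadj n r).
Proof. by move=> x; rewrite /mkadj eqxx. Qed.

Definition mkgraph (n : nat) (r : nat -> nat -> bool) : graph :=
  @Graph n (@mkadj n r) (@mkadj_sym n r) (@mkadj_irr n r).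

Definition induced_sub (H1 H2 : graph) : Prop :=
  exists f : 'I_(gn H1) -> 'I_(gn H2),
    injective f /\ forall x y, gadj H1 x y = gadj H2 (f x) (f y).

Definition graph_family := graph -> Prop.

Definition free (F : graph_family) (G : graph) : Prop :=
  forall H, F H -> ~ induced_sub H G.

Definition family_le (F1 F2 : graph_family) : Prop :=
  forall H2, F2 H2 -> exists2 H1, F1 H1 & induced_sub H1 H2.

Definition deg (G : graph) (v : 'I_(gn G)) : nat := #|[set u | gadj G v u]|.
Arguments deg : clear implicits.

Definition num_deg_ge2 (G : graph) : nat := #|[set v : 'I_(gn G) | 1 < deg G v]|.

Definition Kn (n : nat) : graph := mkgraph n (fun _ _ => true).
(* n P_3 : block i/3, path 0-1-2 inside each block *)
Definition nP3 (n : nat) : graph :=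
  mkgraph (3 * n) (fun i j => (i %/ 3 == j %/ 3) && ((i %% 3).+1 == j %% 3)).
Definition nK3 (n : nat) : graph :=
  mkgraph (3 * n) (fun i j => i %/ 3 == j %/ 3).
(* K_{1,n}^* : centre 0, leaves 1..n, pendant vertex i+n attached to leaf i *)
Definition K1nstar (n : nat) : graph :=
  mkgraph (2 * n).+1
    (fun i j => ((i == 0) && (1 <= j <= n)) || ((1 <= i <= n) && (j == i + n))).
(* K_{2,n} : parts {0,1} and {2,...,n+1} *)
Definition K2n (n : nat) : graph :=
  mkgraph n.+2 (fun i j => (i < 2) && (2 <= j)).
(* K_2 + nK_1 : 0,1 adjacent to each other and to everything *)
Definition K2_join_nK1 (n : nat) : graph :=
  mkgraph n.+2 (fun i _ => i < 2).
(* K_1 + nK_2 : 0 adjacent to everything, edges {2k+1, 2k+2} *)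
Definition K1_join_nK2 (n : nat) : graph :=
  mkgraph (2 * n).+1 (fun i j => (i == 0) || (odd i && (j == i.+1))).

Definition target_family (n : nat) : graph_family :=
  fun G => G = Kn n \/ G = nP3 n \/ G = nK3 n \/ G = K1nstar n \/
           G = K2n n \/ G = K2_join_nK1 n \/ G = K1_join_nK2 n.

(* Main.v *)
Require Import Defs.
From mathcomp Require Import all_boot zify.
From Stdlib Require Import Classical.
Set Implicit Arguments. Unset Strict Implicit. Unset Printing Implicit Defensive.
Lemma sum_count_eq (X : Type) (T : finType) (f : X -> T) (s : seq X) :
  \sum_(c : T) count (fun y => f y == c) s = size s.
Proof.
elim: s => [|x s IH] /=; first by rewrite big1.
rewrite big_split /= IH (bigD1 (f x)) //= eqxx big1 ?add1n // => c /negbTE.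
by rewrite eq_sym => ->.
Qed.

Lemma pigeon (X : Type) (T : finType) (f : X -> T) (s : seq X) (N : nat) :
  #|T| * N < size s -> exists c, N <= count (fun y => f y == c) s.
Proof.
move=> hs.
case: (boolP [exists c, N <= count (fun y => f y == c) s]) => [/existsP[c hc]|hn].
  by exists c.
exfalso.
have h1: \sum_(c : T) count (fun y => f y == c) s <= \sum_(c : T) N.-1.
  apply: leq_sum => c _; move/existsPn: hn => /(_ c); rewrite -ltnNge; lia.
move: h1; rewrite sum_count_eq sum_nat_const => h1.
clear hn; case: s hs h1 => [|x s] h2 h3; first by [].
have : 0 < #|T| by apply/card_gt0P; exists (f x).
move: h3; rewrite -/(#|T|) => h3.
nia.
Qed.

Fixpoint chainb (X : eqType) (T : eqType) (col : X -> X -> T) (t : seq (X * T)) : bool :=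
  if t is p :: t' then all (fun q => col p.1 q.1 == p.2) t' && chainb col t' else true.

Lemma chain_ex (T : finType) (L : nat) :
  exists N, forall (X : eqType) (col : X -> X -> T) (s : seq X), N <= size s ->
    exists t : seq (X * T), [/\ subseq (map fst t) s, chainb col t & size t = L].
Proof.
elim: L => [|L [N IH]]; first by exists 0 => X col s _; exists [::]; split => //; apply: sub0seq.
exists (#|T| * N).+2 => X col [|x s] //= hs.
have [c hc] := pigeon (fun y => col x y) (N := N) (s := s) ltac:(idtac; move: hs; rewrite -/(#|T|); lia).
have [t [h1 h2 h3]] := IH X col (filter (fun y => col x y == c) s) ltac:(by rewrite size_filter).
exists ((x, c) :: t); split => /=.
- by rewrite eqxx; apply: subseq_trans h1 (filter_subseq _ _).
- rewrite h2 andbT; apply/allP => q qin.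
  have : q.1 \in filter (fun y => col x y == c) s.
    by apply: (mem_subseq h1); apply: map_f.
  by rewrite mem_filter => /andP[].
- by rewrite h3.
Qed.

Lemma chain_filter (X : eqType) (T : eqType) (col : X -> X -> T) (P : pred (X * T)) t :
  chainb col t -> chainb col (filter P t).
Proof.
elim: t => [|p t IH] //= /andP[h1 h2]; case: (P p) => /=; last exact: IH.
rewrite IH // andbT; apply/allP => q; rewrite mem_filter => /andP[_ qin].
by move/allP: h1; apply.
Qed.

Lemma chain_hom (X : eqType) (T : eqType) (col : X -> X -> T) c t :
  chainb col t -> all (fun p => p.2 == c) t ->
  forall p0 i j, i < j < size t -> col (nth p0 t i).1 (nth p0 t j).1 = c.
Proof.
elim: t => [|[x c'] t IH]; first by move=> _ _ p0 i j /=; lia.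
move=> /= /andP[h1 h2] /andP[/eqP e h3] p0 [|i] [|j] //=.
- move=> hj; rewrite -e.
  have hm : nth p0 t j \in t.
    by apply: mem_nth; exact: hj.
  exact: (eqP (allP h1 _ hm)).
- move=> hij; apply: IH => //; lia.
Qed.

Lemma ramsey (T : finType) (M : nat) :
  exists N, forall (X : eqType) (col : X -> X -> T) (s : seq X), N <= size s ->
    exists (u : seq X) c, [/\ subseq u s, M <= size u &
      forall x0 i j, i < j < size u -> col (nth x0 u i) (nth x0 u j) = c].
Proof.
have [N HN] := chain_ex T (#|T| * M).+1.
exists N => X col s hs.
have [t [h1 h2 h3]] := HN X col s hs.
have [c hc] := pigeon snd (N := M) (s := t) ltac:(lia).
set t' := filter (fun p => p.2 == c) t.
exists (map fst t'), c; split.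
- apply: subseq_trans h1; apply: map_subseq; apply: filter_subseq.
- by rewrite size_map size_filter.
- move=> x0 i j; rewrite size_map => hij.
  rewrite (nth_map (x0, c)); last lia.
  rewrite (nth_map (x0, c)); last lia.
  apply: chain_hom; first exact: chain_filter.
    by apply/allP => p; rewrite mem_filter => /andP[].
  exact: hij.
Qed.

Lemma induced_trans A B C : induced_sub A B -> induced_sub B C -> induced_sub A C.
Proof.
move=> [f [fi fa]] [g [gi ga]]; exists (g \o f); split; first exact: inj_comp.
by move=> x y /=; rewrite fa ga.
Qed.

Lemma embed_mk N r (G : graph) (f : nat -> 'I_(gn G)) :
  (forall x y, x < y < N -> f x != f y /\ (r x y || r y x) = gadj G (f x) (f y)) ->
  induced_sub (mkgraph N r) G.
Proof.
move=> H; exists (fun x : 'I_N => f x); split.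
  move=> x y /= e; case: (ltngtP x y) => [lt|gt|eq].
  - have hh : x < y < N by rewrite lt ltn_ord.
    by case: (H x y hh); rewrite e eqxx.
  - have hh : y < x < N by rewrite gt ltn_ord.
    by case: (H y x hh); rewrite e eqxx.
  - exact: val_inj.
move=> x y /=; rewrite /mkadj; case: (ltngtP x y) => [lt|gt|eq].
- have hh : x < y < N by rewrite lt ltn_ord.
  have [_ ->] := H x y hh.
  by have -> : x != y by rewrite neq_ltn lt.
- have hh : y < x < N by rewrite gt ltn_ord.
  have [_ h] := H y x hh.
  have -> : x != y by rewrite neq_ltn gt orbT.
  by rewrite orbC h gsym.
- have -> : x = y by exact: val_inj.
  by rewrite eqxx girr.
Qed.

Lemma deg2_of (G : graph) v u1 u2 : gadj G v u1 -> gadj G v u2 -> u1 != u2 -> 1 < deg G v.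
Proof.
move=> h1 h2 ne; rewrite /deg.
have: [set u1; u2] \subset [set u | gadj G v u].
  by apply/subsetP => x; rewrite !inE => /orP[]/eqP->.
move/subset_leq_card; rewrite cards2 ne; exact.
Qed.

Definition mkedge (r : nat -> nat -> bool) x y := (x != y) && (r x y || r y x).

Lemma count_lb_mk N r n (g : nat -> nat) :
  (forall i, i < n -> g i < N) -> (forall i j, i < j < n -> g i != g j) ->
  (forall i, i < n -> exists u1 u2, [/\ u1 < N, u2 < N, u1 != u2, mkedge r (g i) u1 & mkedge r (g i) u2]) ->
  n <= num_deg_ge2 (mkgraph N r).
Proof.
case: n => [|n] // hN hinj hdeg.
case: N r hN hinj hdeg => [|N] r hN hinj hdeg; first by have := hN 0 isT.
rewrite /num_deg_ge2.
have sub : [set (inord (g i) : 'I_N.+1) | i : 'I_n.+1] \subset [set v : 'I_(gn (mkgraph N.+1 r)) | 1 < deg (mkgraph N.+1 r) v].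
  apply/subsetP => v /imsetP[i _ ->]; rewrite inE.
  have [u1 [u2 [h1 h2 ne e1 e2]]] := hdeg i (ltn_ord i).
  have gi := hN i (ltn_ord i).
  apply: (@deg2_of (mkgraph N.+1 r) _ (@inord N u1) (@inord N u2)).
  - by rewrite /= /mkadj -(inj_eq val_inj) /= !inordK.
  - by rewrite /= /mkadj -(inj_eq val_inj) /= !inordK.
  - apply/negP => /eqP/(congr1 (@nat_of_ord _)); rewrite !inordK //; apply/eqP; exact: ne.
apply: leq_trans (subset_leq_card sub); rewrite card_imset ?card_ord //.
move=> i j /(congr1 (@nat_of_ord _)); rewrite !inordK ?hN // => e; apply: val_inj => /=.
case: (ltngtP i j) => [lt|gt|//].
- have hh : i < j < n.+1 by rewrite lt ltn_ord.
  by have := hinj i j hh; rewrite e eqxx.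
- have hh : j < i < n.+1 by rewrite gt ltn_ord.
  by have := hinj j i hh; rewrite e eqxx.
Qed.

Lemma target_lb n T : 3 <= n -> target_family n T -> n <= num_deg_ge2 T.
Proof.
move=> hn [->|[->|[->|[->|[->|[->|->]]]]]].
- apply: (@count_lb_mk _ _ _ id) => [i hi|i j hij|i hi] /=; try lia.
  exists (if i == 0 then 1 else 0), (if i == 2 then 1 else 2).
  rewrite /mkedge; case: eqP => h1; case: eqP => h2; split; lia.
- apply: (@count_lb_mk _ _ _ (fun i => 3 * i + 1)) => [i hi|i j hij|i hi] /=; try lia.
  exists (3 * i), (3 * i + 2); rewrite /mkedge; split; lia.
- apply: (@count_lb_mk _ _ _ (fun i => 3 * i)) => [i hi|i j hij|i hi] /=; try lia.
  exists (3 * i + 1), (3 * i + 2); rewrite /mkedge; split; lia.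
- apply: (@count_lb_mk _ _ _ (fun i => i.+1)) => [i hi|i j hij|i hi] /=; try lia.
  exists 0, (i.+1 + n); rewrite /mkedge; split; lia.
- apply: (@count_lb_mk _ _ _ (fun i => i.+2)) => [i hi|i j hij|i hi] /=; try lia.
  exists 0, 1; rewrite /mkedge; split; lia.
- apply: (@count_lb_mk _ _ _ (fun i => i.+2)) => [i hi|i j hij|i hi] /=; try lia.
  exists 0, 1; rewrite /mkedge; split; lia.
- apply: (@count_lb_mk _ _ _ (fun i => (2 * i).+1)) => [i hi|i j hij|i hi] /=; try lia.
  exists 0, (2 * i).+2; rewrite /mkedge; split; lia.
Qed.

Definition aV (G : graph) (v : 'I_(gn G)) : 'I_(gn G) := odflt v [pick u | gadj G v u].
Definition bV (G : graph) (v : 'I_(gn G)) : 'I_(gn G) :=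
  odflt v [pick u | gadj G v u && (u != aV v)].
Definition role (G : graph) (k : nat) (v : 'I_(gn G)) : 'I_(gn G) :=
  if k is 0 then v else if k is 1 then aV v else bV v.

Lemma gadget (G : graph) v : 1 < deg G v ->
  [/\ gadj G v (aV v), gadj G v (bV v) & aV v != bV v].
Proof.
move=> hd.
have ha : gadj G v (aV v).
  rewrite /aV; case: pickP => [u //|none].
  move: hd; rewrite /deg (_ : [set u | gadj G v u] = set0) ?cards0 //.
  by apply/setP => u; rewrite inE in_set0 none.
have hb : gadj G v (bV v) && (bV v != aV v).
  rewrite /bV; case: pickP => [u //|none].
  move: hd; rewrite /deg => hd; exfalso.
  have : [set u | gadj G v u] \subset [set aV v].
    apply/subsetP => u; rewrite !inE => hu; have := none u; rewrite /= hu /=.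
    by move/negbFE.
  move/subset_leq_card; rewrite cards1; lia.
by case/andP: hb => h1 h2; split => //; rewrite eq_sym.
Qed.

Lemma inner_ne (G : graph) v k l : 1 < deg G v -> k < 3 -> l < 3 -> k != l ->
  role k v != role l v.
Proof.
move=> /gadget [ha hb ab].
have va : v != aV v by apply: contraTneq ha => <-; rewrite girr.
have vb : v != bV v by apply: contraTneq hb => <-; rewrite girr.
case: k l => [|[|[|k]]] [|[|[|l]]] //= *; by rewrite /role // eq_sym.
Qed.

Lemma inner_adj (G : graph) v k l : 1 < deg G v -> k < 3 -> l < 3 -> k != l ->
  gadj G (role k v) (role l v) = if k + l == 3 then gadj G (role 1 v) (role 2 v) else true.
Proof.
move=> /gadget [ha hb ab].
case: k l => [|[|[|k]]] [|[|[|l]]] //= *; by rewrite /role // gsym.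
Qed.

Arguments role : simpl never.

Definition good (G : graph) n (w : nat -> 'I_(gn G)) :=
  [/\ forall i, i < n+3 -> 1 < deg G (w i),
      forall i j, i < j < n+3 -> w i != w j,
      forall i j k l, i < j < n+3 ->
        (role k (w i) == role l (w j)) = (role k (w 0) == role l (w 1)),
      forall i j k l, i < j < n+3 ->
        gadj G (role k (w i)) (role l (w j)) = gadj G (role k (w 0)) (role l (w 1)) &
      forall i, i < n+2 ->
        gadj G (role 1 (w i)) (role 2 (w i)) = gadj G (role 1 (w 0)) (role 2 (w 0))].

Definition Eq_ (G : graph) (w : nat -> 'I_(gn G)) k l := role k (w 0) == role l (w 1).
Definition Ad (G : graph) (w : nat -> 'I_(gn G)) k l := gadj G (role k (w 0)) (role l (w 1)).
Definition ev (G : graph) (w : nat -> 'I_(gn G)) := gadj G (role 1 (w 0)) (role 2 (w 0)).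

Lemma Enot G n w : @good G n w -> forall k l, k < 3 -> l < 3 -> k != l -> Eq_ w k l = false.
Proof.
case=> hD hw hE hA he k l hk hl kl; apply/negP => e.
have e1 := hE 0 2 k l ltac:(lia); have e2 := hE 1 2 k l ltac:(lia).
rewrite -/(Eq_ w k l) e in e1 e2.
move/eqP: e => e; move/eqP: e1 => e1; move/eqP: e2 => e2.
have := inner_ne (hD 1 ltac:(lia)) hk hl kl.
by rewrite e2 -e1 e eqxx.
Qed.

Lemma E00 G n w : @good G n w -> Eq_ w 0 0 = false.
Proof. by case=> hD hw hE hA he; apply/negbTE; apply: (hw 0 1); lia. Qed.

Lemma common G n w : @good G n w -> forall p j, Eq_ w p p -> j < n + 3 ->
  role p (w j) = role p (w 0).
Proof.
case=> hD hw hE hA he p [|j] // e hj.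
by have := hE 0 j.+1 p p ltac:(lia); rewrite -/(Eq_ w p p) e => /eqP.
Qed.

Lemma cross_priv G n w : @good G n w -> forall i j k l, i != j -> i < n + 3 -> j < n + 3 ->
  k < 3 -> l < 3 -> ~~ Eq_ w k k -> ~~ Eq_ w l l -> (forall k l, k < 3 -> l < 3 ->
  ~~ Eq_ w k k -> ~~ Eq_ w l l -> ~~ Ad w k l) ->
  role k (w i) != role l (w j) /\ gadj G (role k (w i)) (role l (w j)) = false.
Proof.
move=> hg; have := hg; case=> hD hw hE hA he i j k l ij hi hj hk hl ek el hp.
have neq : forall k l, k < 3 -> l < 3 -> ~~ Eq_ w k k -> ~~ Eq_ w l l -> ~~ Eq_ w k l.
  move=> k' l' hk' hl' ek' el'; case: (eqVneq k' l') => [->//|kl].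
  by rewrite (Enot hg).
case: (ltngtP i j) => [lt|gt|eq]; last by rewrite eq eqxx in ij.
- rewrite hE ?hA; last lia; last lia.
  by split; [exact: neq | apply/negbTE; exact: hp].
- rewrite eq_sym gsym hE ?hA; last lia; last lia.
  by split; [exact: neq | apply/negbTE; exact: hp].
Qed.

Definition goal (G : graph) n := exists T, target_family n T /\ induced_sub T G.

Lemma case_clique G n w : @good G n w -> forall k, Ad w k k -> goal G n.
Proof.
move=> hg k akk; have := hg; case=> hD hw hE hA he.
exists (Kn n); split; first by left.
apply: (@embed_mk _ _ G (fun x => role k (w x))) => x y hxy; split.
- apply/negP => /eqP e; have := hA x y k k ltac:(lia).
  by rewrite e girr -/(Ad w k k) akk.
- by rewrite /= hA //; lia.
Qed.

Lemma case_k2n G n w : @good G n w -> forall k l, k < 3 -> l < 3 -> k != l ->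
  ~~ Eq_ w k k -> ~~ Eq_ w l l -> ~~ Ad w k k -> ~~ Ad w l l -> Ad w k l -> goal G n.
Proof.
move=> hg k l hk hl kl ek el akk all akl; have := hg; case=> hD hw hE hA he.
exists (K2n n); split; first by do 4 right; left.
apply: (@embed_mk _ _ G (fun x => if x < 2 then role k (w x) else role l (w x))) => x y hxy /=.
case: (ltnP y 2) => hy.
  have -> : x < 2 by lia.
  rewrite hE ?hA; try lia; split; first exact: ek.
  rewrite -/(Ad w k k) (negbTE akk); lia.
case: (ltnP x 2) => hx.
  rewrite hE ?hA; try lia; split; first by rewrite -/(Eq_ w k l) (Enot hg).
  rewrite -/(Ad w k l) akl; lia.
rewrite hE ?hA; try lia; split; first exact: el.
rewrite -/(Ad w l l) (negbTE all); lia.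
Qed.

Lemma case_priv3 G n w : @good G n w ->
  ~~ Eq_ w 1 1 -> ~~ Eq_ w 2 2 ->
  (forall k l, k < 3 -> l < 3 -> ~~ Eq_ w k k -> ~~ Eq_ w l l -> ~~ Ad w k l) ->
  goal G n.
Proof.
move=> hg e11 e22 hp; have := hg; case=> hD hw hE hA he.
have pr : forall k, k < 3 -> ~~ Eq_ w k k.
  by case=> [|[|[|k]]] // _; rewrite (E00 hg).
have cp := cross_priv hg.
case hev: (ev w).
- exists (nK3 n); split; first by do 2 right; left.
  apply: (@embed_mk _ _ G (fun x => role (x %% 3) (w (x %/ 3)))) => x y hxy /=.
  case: (ltngtP (x %/ 3) (y %/ 3)) => [lt|gt|eq].
  + have [h1 h2] := cp (x %/ 3) (y %/ 3) (x %% 3) (y %% 3) ltac:(lia) ltac:(lia) ltac:(lia)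
      ltac:(lia) ltac:(lia) (pr (x %% 3) ltac:(lia)) (pr (y %% 3) ltac:(lia)) hp.
    split => //; rewrite h2; lia.
  + lia.
  + rewrite -eq; have hi : x %/ 3 < n by lia.
    split; first by apply: inner_ne; try lia; apply: hD; lia.
    rewrite inner_adj; try lia; last by apply: hD; lia.
    rewrite he; last lia.
    rewrite -/(ev w) hev if_same; lia.
- pose pm k := if k == 0 then 1 else if k == 1 then 0 else 2.
  exists (nP3 n); split; first by right; left.
  apply: (@embed_mk _ _ G (fun x => role (pm (x %% 3)) (w (x %/ 3)))) => x y hxy /=.
  case: (ltngtP (x %/ 3) (y %/ 3)) => [lt|gt|eq].
  + have hpm : forall k, pm k < 3 by move=> k; rewrite /pm; case: ifP => //; case: ifP.
    have [h1 h2] := cp (x %/ 3) (y %/ 3) (pm (x %% 3)) (pm (y %% 3)) ltac:(lia) ltac:(lia) ltac:(lia)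
      (hpm _) (hpm _) (pr _ (hpm _)) (pr _ (hpm _)) hp.
    split => //; rewrite h2; lia.
  + lia.
  + rewrite -eq; have hi : x %/ 3 < n by lia.
    have hd := hD (x %/ 3) ltac:(lia).
    have hee := he (x %/ 3) ltac:(lia).
    rewrite -/(ev w) hev in hee.
    have : x %% 3 = 0 /\ y %% 3 = 1 \/ x %% 3 = 0 /\ y %% 3 = 2 \/ x %% 3 = 1 /\ y %% 3 = 2 by lia.
    case=> [[h1 h2]|[[h1 h2]|[h1 h2]]]; rewrite h1 h2 /pm /=.
    * split; first exact: inner_ne.
      rewrite inner_adj //=; lia.
    * split; first exact: inner_ne.
      rewrite hee; lia.
    * split; first exact: inner_ne.
      rewrite inner_adj //=; lia.
Qed.

Lemma case_one G n w : @good G n w -> forall p q, 0 < p < 3 -> 0 < q < 3 -> p != q ->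
  Eq_ w p p -> ~~ Eq_ w q q ->
  (forall k l, k < 3 -> l < 3 -> ~~ Eq_ w k k -> ~~ Eq_ w l l -> ~~ Ad w k l) ->
  goal G n.
Proof.
move=> hg p q hp hq pq ep eq hpr; have := hg; case=> hD hw hE hA he.
have pqs : p + q = 3 by lia.
have cp := cross_priv hg.
have cm := common hg ep.
have e0 : ~~ Eq_ w 0 0 by rewrite (E00 hg).
case hev: (ev w).
- exists (K1_join_nK2 n); split; first by do 6 right.
  pose rl x := if odd x then 0 else q.
  have hrl : forall x, rl x < 3 /\ ~~ Eq_ w (rl x) (rl x).
    by move=> x; rewrite /rl; case: ifP => _; split => //; lia.
  apply: (@embed_mk _ _ G (fun x => if x == 0 then role p (w 0)
      else role (rl x) (w ((x - 1) %/ 2)))) => x y hxy /=.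
  have -> : (y == 0) = false by lia.
  case: (posnP x) => [x0|xpos].
  + rewrite x0 /= -(cm ((y - 1) %/ 2)); last lia.
    have hd := hD ((y - 1) %/ 2) ltac:(lia).
    have hee := he ((y - 1) %/ 2) ltac:(lia).
    rewrite -/(ev w) hev in hee.
    rewrite /rl; case oy: (odd y).
    * split; first by apply: inner_ne; lia.
      rewrite inner_adj //; try lia. rewrite (_ : p + 0 == 3 = false) //; lia.
    * split; first by apply: inner_ne; lia.
      rewrite inner_adj //; try lia. rewrite pqs eqxx hee; lia.
  + 
    case: (ltngtP ((x - 1) %/ 2) ((y - 1) %/ 2)) => [lt|gt|eq2].
    * have [h1 h2] := cp ((x - 1) %/ 2) ((y - 1) %/ 2) (rl x) (rl y) ltac:(lia) ltac:(lia) ltac:(lia)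
        (hrl x).1 (hrl y).1 (hrl x).2 (hrl y).2 hpr.
      split => //; rewrite h2; lia.
    * lia.
    * rewrite -eq2.
      have hd := hD ((x - 1) %/ 2) ltac:(lia).
      have ox : odd x by lia.
      have oy : odd y = false by lia.
      rewrite /rl ox oy.
      split; first by apply: inner_ne; lia.
      rewrite inner_adj //; try lia. rewrite (_ : 0 + q == 3 = false); lia.
- exists (K1nstar n); split; first by do 3 right; left.
  apply: (@embed_mk _ _ G (fun x => if x == 0 then role p (w 0)
      else if x <= n then role 0 (w (x - 1)) else role q (w (x - 1 - n)))) => x y hxy /=.
  have -> : (y == 0) = false by lia.
  case: (posnP x) => [x0|xpos].
  + rewrite x0 /=.
    case: (leqP y n) => hy.
    * rewrite -(cm (y - 1)); last lia.
      have hd := hD (y - 1) ltac:(lia).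
      split; first by apply: inner_ne; lia.
      rewrite inner_adj //; try lia. rewrite (_ : p + 0 == 3 = false); lia.
    * rewrite -(cm (y - 1 - n)); last lia.
      have hd := hD (y - 1 - n) ltac:(lia).
      have hee := he (y - 1 - n) ltac:(lia).
      rewrite -/(ev w) hev in hee.
      split; first by apply: inner_ne; lia.
      rewrite inner_adj //; try lia. rewrite pqs eqxx.
      have -> : gadj G (role 1 (w (y - 1 - n))) (role 2 (w (y - 1 - n))) = false by [].
      lia.
  + 
    case: (leqP y n) => hy.
    * have -> : x <= n by lia.
      have [h1 h2] := cp (x - 1) (y - 1) 0 0 ltac:(lia) ltac:(lia) ltac:(lia)
        isT isT e0 e0 hpr.
      split => //; rewrite h2; lia.
    * case: (leqP x n) => hx.
      - case: (eqVneq (x - 1) (y - 1 - n)) => [exy|nxy].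
        + rewrite exy.
          have hd := hD (y - 1 - n) ltac:(lia).
          split; first by apply: inner_ne; lia.
          rewrite inner_adj //; try lia. rewrite (_ : 0 + q == 3 = false); lia.
        + have [h1 h2] := cp (x - 1) (y - 1 - n) 0 q nxy ltac:(lia) ltac:(lia)
            isT ltac:(lia) e0 eq hpr.
          split => //; rewrite h2; lia.
      - have [h1 h2] := cp (x - 1 - n) (y - 1 - n) q q ltac:(lia) ltac:(lia) ltac:(lia)
          ltac:(lia) ltac:(lia) eq eq hpr.
        split => //; rewrite h2; lia.
Qed.

Lemma case_two G n w : @good G n w -> Eq_ w 1 1 -> Eq_ w 2 2 ->
  (forall k l, k < 3 -> l < 3 -> ~~ Eq_ w k k -> ~~ Eq_ w l l -> ~~ Ad w k l) ->
  goal G n.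
Proof.
move=> hg e1 e2 hpr; have := hg; case=> hD hw hE hA he.
have cp := cross_priv hg.
have c1 := common hg e1; have c2 := common hg e2.
have e0 : ~~ Eq_ w 0 0 by rewrite (E00 hg).
have hd0 := hD 0 ltac:(lia).
pose f x := if x == 0 then role 1 (w 0) else if x == 1 then role 2 (w 0) else role 0 (w (x - 2)).
have key : forall x y, x < y < n.+2 -> f x != f y /\
   (if (x < 2) && (y < 2) then gadj G (f x) (f y) = ev w
    else if x < 2 then gadj G (f x) (f y) = true else gadj G (f x) (f y) = false).
  move=> x y hxy; rewrite /f.
  case: (ltnP y 2) => hy.
    have x0 : x = 0 by lia. have y1 : y = 1 by lia. subst x y.
    rewrite /=; split => //; apply: inner_ne; lia.
  have -> : (y == 0) = false by lia. have -> : (y == 1) = false by lia.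
  case: (ltnP x 2) => hx /=.
    have hd := hD (y - 2) ltac:(lia).
    case: (posnP x) => [|xpos] /=.
      rewrite -(c1 (y - 2)); last lia.
      split; first by apply: inner_ne; lia.
      by rewrite inner_adj //; lia.
    have -> : (x == 1) = true by lia.
    rewrite -(c2 (y - 2)); last lia.
    split; first by apply: inner_ne; lia.
    by rewrite inner_adj //; lia.
  have -> : (x == 0) = false by lia. have -> : (x == 1) = false by lia.
  exact: (cp (x - 2) (y - 2) 0 0 ltac:(lia) ltac:(lia) ltac:(lia) isT isT e0 e0 hpr).
case hev: (ev w).
- exists (K2_join_nK1 n); split; first by do 5 right; left.
  apply: (@embed_mk _ _ G f) => x y hxy /=.
  have [h1 h2] := key x y hxy; split => //.
  move: h2; case: ifP => h3; first by move=> ->; move: h3; lia.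
  case: ifP => h4 -> ; lia.
- exists (K2n n); split; first by do 4 right; left.
  apply: (@embed_mk _ _ G f) => x y hxy /=.
  have [h1 h2] := key x y hxy; split => //.
  move: h2; case: ifP => h3; first by move=> ->; move: h3; lia.
  case: ifP => h4 -> ; lia.
Qed.

Lemma extract G n w : @good G n w -> goal G n.
Proof.
move=> hg.
case: (boolP [exists k : 'I_3, exists l : 'I_3, [&& ~~ Eq_ w k k, ~~ Eq_ w l l & Ad w k l]]).
  case/existsP => k /existsP [l /and3P [ek el akl]].
  case: (boolP (Ad w k k)) => akk; first exact: (case_clique hg akk).
  case: (boolP (Ad w l l)) => all; first exact: (case_clique hg all).
  case: (eqVneq (k : nat) l) => kl; first by move: akl; rewrite kl (negbTE all).
  exact: (case_k2n hg (ltn_ord k) (ltn_ord l) kl ek el akk all akl).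
move=> hn.
have hpr : forall k l, k < 3 -> l < 3 -> ~~ Eq_ w k k -> ~~ Eq_ w l l -> ~~ Ad w k l.
  move=> k l hk hl ek el; apply/negP => akl; move/negP: hn; apply.
  apply/existsP; exists (Ordinal hk); apply/existsP; exists (Ordinal hl).
  by rewrite /= ek el akl.
case: (boolP (Eq_ w 1 1)) => e1; case: (boolP (Eq_ w 2 2)) => e2.
- exact: (case_two hg e1 e2 hpr).
- exact: (case_one hg (p:=1) (q:=2) isT isT isT e1 e2 hpr).
- exact: (case_one hg (p:=2) (q:=1) isT isT isT e2 e1 hpr).
- exact: (case_priv3 hg e1 e2 hpr).
Qed.

Definition CT : finType := ({ffun 'I_3 * 'I_3 -> bool * bool} * bool)%type.

Definition colG (G : graph) (u v : 'I_(gn G)) : CT :=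
  ([ffun p : 'I_3 * 'I_3 => (role p.1 u == role p.2 v, gadj G (role p.1 u) (role p.2 v))],
   gadj G (role 1 u) (role 2 u)).

Lemma role_k3 (G : graph) k (v : 'I_(gn G)) : role (@inord 2 (minn k 2)) v = role k v.
Proof. rewrite inordK; last lia. by case: k => [|[|k]]. Qed.

Lemma find_target n : exists N, forall G, N <= num_deg_ge2 G -> goal G n.
Proof.
have [N HN] := ramsey CT (n + 3).
exists N => G hG.
have hs : N <= size (enum [set v : 'I_(gn G) | 1 < deg G v]) by rewrite -cardE.
have [u [c [hsub hsz hhom]]] := HN _ (@colG G) _ hs.
case: u hsub hsz hhom => [|x0 u'] hsub hsz hhom; first by move: hsz; rewrite /=; lia.
pose w i := nth x0 (x0 :: u') i.
have huniq : uniq (x0 :: u') by apply: subseq_uniq hsub (enum_uniq _).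
have hcol : forall i j, i < j < n + 3 -> colG (w i) (w j) = colG (w 0) (w 1).
  move=> i j hij; rewrite /w !hhom //; move: hsz; rewrite /=; lia.
apply: (@extract G n w); split.
- move=> i hi; have : w i \in enum [set v : 'I_(gn G) | 1 < deg G v].
    apply: (mem_subseq hsub); apply: mem_nth; move: hsz; rewrite /=; lia.
  by rewrite mem_enum inE.
- move=> i j hij; rewrite /w nth_uniq //; move: hsz; rewrite /=; lia.
- move=> i j k l hij.
  have := congr1 (fun c : CT => c.1 (@inord 2 (minn k 2), @inord 2 (minn l 2))) (hcol i j hij).
  by rewrite /= !ffunE /= !role_k3 => /(congr1 fst).
- move=> i j k l hij.
  have := congr1 (fun c : CT => c.1 (@inord 2 (minn k 2), @inord 2 (minn l 2))) (hcol i j hij).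
  by rewrite /= !ffunE /= !role_k3 => /(congr1 snd).
- move=> i hi.
  have := congr1 snd (hcol i i.+1 ltac:(lia)).
  by [].
Qed.

Theorem corollary1p8 (H : graph_family) :
  (exists c : nat, forall G : graph, free H G -> num_deg_ge2 G < c) <->
  (exists n : nat, 0 < n /\ family_le H (target_family n)).
Proof.
split.
- move=> [c hc]; exists (c + 3); split; first lia.
  move=> T hT; apply: NNPP => hno.
  have fr : free H T by move=> H1 h1 hi; apply: hno; exists H1.
  have := hc T fr; have := target_lb (n := c + 3) ltac:(lia) hT; lia.
- move=> [n [_ hle]].
  have [N HN] := find_target n.
  exists N => G fr; rewrite ltnNge; apply/negP => hG.
  have [T [hT hi]] := HN G hG.
  have [H1 h1 h1T] := hle T hT.
  exact: (fr H1 h1 (induced_trans h1T hi)).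
Qed.
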